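(* Let $(V,d,k,q)$ be an instance of the individually fair $k$-center with outliers problem (IF$k$CO) as defined in the context. Then the basic algorithm (Algorithm 2) described in the context outputs a feasible solution $(S,O,\sigma)$ for this instance, i.e. $|S|\le k$ and $|O|\le q$.
   Context: IF$k$CO instance: a finite set $V$ with $|V|=n$, a metric $d$ on $V$ (nonnegative, symmetric, $d_{ii}=0$, triangle inequality), and integers $k\ge 1$ and $q\ge 0$. For $i\in V$, $NR_q(i)$ is the distance from $i$ to its $\lceil (n-q)/k\rceil$-th nearest neighbor in $V$, where $i$ counts as its own (first) nearest neighbor. A solution is $(S,O,\sigma)$ with $S,O\subseteq V$ and $\sigma:V\setminus O\to S$; feasible if $|S|\le k$ and $|O|\le q$. Algorithm 2: set $P:=V$, $S:=\emptyset$. While $P\neq\emptyset$ and $|S|<k$: pick $s\in P$ minimizing $NR_q(i)$ over $i\in P$; set $S:=S\cup\{s\}$ and $P:=\{i\in P: d_{is}>2\,NR_q(i)\}$. Then set $O:=P$ and, for each $i\in V\setminus O$, let $\sigma(i)$ be a center $h\in S$ minimizing $d_{ih}$. Output $(S,O,\sigma)$. *)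

(* Defs.v *)
From mathcomp Require Import all_boot all_order all_algebra.
Set Implicit Arguments. Unset Strict Implicit. Unset Printing Implicit Defensive.
Import Order.TTheory GRing.Theory Num.Theory.
Local Open Scope ring_scope.

Section IFkCO.
Variables (R : realFieldType) (V : finType) (d : V -> V -> R) (k q : nat).

Definition is_metric : Prop :=
  [/\ forall i j, 0 <= d i j,
      forall i j, d i j = d j i,
      forall i, d i i = 0 &
      forall i j l, d i l <= d i j + d j l].

(* ceil((n - q)/k), with n = |V|; (n - q) truncated at 0 *)
Definition nr_rank : nat := ((#|V| - q) + k.-1) %/ k.

(* NR_q(i): distance from i to its nr_rank-th nearest neighbour
   (i itself counting as first): the nr_rank-th smallest entry (1-based,
   with multiplicity) of the multiset {d i j | j in V}. *)
Definition NR (i : V) : R :=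
  nth 0 (sort <=%R [seq d i j | j <- enum V]) nr_rank.-1.

(* Run of the while loop of Algorithm 2: [alg2_loop P S O S'] means that,
   started in state (P, S), the loop may terminate in state (O, S')
   (for some resolution of the ties in the choice of s). *)
Inductive alg2_loop : {set V} -> {set V} -> {set V} -> {set V} -> Prop :=
| alg2_stop (P S : {set V}) :
    ~~ ((P != set0) && (#|S| < k)%N) -> alg2_loop P S P S
| alg2_step (P S : {set V}) (s : V) (O S' : {set V}) :
    P != set0 -> (#|S| < k)%N -> s \in P ->
    (forall i, i \in P -> NR s <= NR i) ->
    alg2_loop [set i in P | 2 * NR i < d i s] (s |: S) O S' ->
    alg2_loop P S O S'.

Definition alg2_output (S O : {set V}) (sigma : V -> V) : Prop :=
  alg2_loop [set: V] set0 O S /\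
  (forall i, i \notin O ->
     sigma i \in S /\ (forall h, h \in S -> d i (sigma i) <= d i h)).

Definition feasible (S O : {set V}) : Prop :=
  (#|S| <= k)%N /\ (#|O| <= q)%N.

End IFkCO.

(* Main.v *)
Set Implicit Arguments. Unset Strict Implicit.
Require Import Defs.
From mathcomp Require Import all_boot all_order all_algebra zify lra.
Import Order.TTheory GRing.Theory Num.Theory.
Local Open Scope ring_scope.

Section S.
Variables (R : realFieldType) (V : finType) (d : V -> V -> R) (k q : nat).
Hypothesis hd : is_metric d.
Hypothesis hk : (1 <= k)%N.

Lemma NR_ge0 i : 0 <= NR d k q i.
Proof.
rewrite /NR; set l := sort _ _.
have [hi|hi] := ltnP (nr_rank V k q).-1 (size l).
  have /mapP[j _ ->] : nth 0 l (nr_rank V k q).-1 \in [seq d i j | j <- enum V].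
    by rewrite -(mem_sort <=%R) mem_nth.
  by case: hd.
by rewrite nth_default.
Qed.

Lemma rank_le : (nr_rank V k q <= #|V| - q)%N.
Proof.
rewrite /nr_rank -ltnS ltn_divLR; last by [].
have : (#|V| - q <= (#|V| - q) * k)%N by rewrite leq_pmulr.
case: k hk => // k' _; lia.
Qed.

Lemma rank_ge : (#|V| - q <= k * nr_rank V k q)%N.
Proof.
rewrite /nr_rank.
have := divn_eq (#|V| - q + k.-1) k.
have := ltn_pmod (#|V| - q + k.-1) hk.
set a := (_ %/ _)%N; set b := (_ %% _)%N.
case: k hk => // k' _ /=; nia.
Qed.

Lemma ball_card s : (nr_rank V k q <= #|[set j | (d s j <= NR d k q s)%R]|)%N.
Proof.
set r := nr_rank V k q.
set l := [seq d s j | j <- enum V].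
set sl := sort <=%R l.
have -> : #|[set j | (d s j <= NR d k q s)%R]| = count (fun x => x <= NR d k q s) sl.
  have hp : perm_eq sl l by rewrite /sl perm_sort.
  rewrite ((permP hp) (fun x => x <= NR d k q s)) /l count_map cardsE cardE.
  rewrite /enum_mem size_filter.
  by rewrite (@eq_filter _ _ predT) ?filter_predT.
have hr : (r <= size sl)%N.
  rewrite size_sort size_map -cardE.
  apply: leq_trans rank_le _; exact: leq_subr.
rewrite -(cat_take_drop r sl) count_cat.
apply: leq_trans (leq_addr _ _).
have : all (fun x => x <= NR d k q s) (take r sl).
  apply/allP => x /(nthP 0) [i hi <-].
  rewrite size_take_min (minn_idPl hr) in hi.
  rewrite nth_take // /NR -/r -/l -/sl.
  apply: (sorted_leq_nth le_trans lexx 0 (sort_sorted le_total l)).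
  - rewrite inE; exact: leq_trans hi hr.
  - rewrite inE; case: (r) hi hr => // r' _ /=; lia.
  - case: (r) hi => // r' /=; lia.
rewrite all_count => /eqP ->.
by rewrite size_take_min (minn_idPl hr).
Qed.

Definition Inv (P S : {set V}) : Prop :=
  [/\ (#|S| <= k)%N,
   (forall s' j, s' \in S -> j \in P -> 2 * NR d k q j < d j s' /\ NR d k q s' <= NR d k q j) &
   exists U : {set V}, (#|S| * nr_rank V k q <= #|U|)%N /\
     forall j, j \in U -> exists2 s', s' \in S & d s' j <= NR d k q s'].

Lemma disj_aux (A U : {set V}) : (forall j, j \in A -> j \in U -> False) -> #|A :|: U| = (#|A| + #|U|)%N.
Proof.
move=> h; rewrite cardsU.
have -> : A :&: U = set0.
  apply/setP => j; rewrite !inE; apply/negbTE/negP => /andP[a b]; exact: h a b.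
by rewrite cards0 subn0.
Qed.

Lemma loop_inv P S O S' : alg2_loop d k q P S O S' -> Inv P S ->
  Inv O S' /\ ~~ ((O != set0) && (#|S'| < k)%N).
Proof.
elim => [P0 S0 hstop|P0 S0 s O0 S1 hP hS hs hmin _ IH] hinv; first by [].
apply: IH.
case: hinv => hk0 hPS [U [hU hUS]].
case: (hd) => d0 dsym d00 dtri.
have hsS : s \notin S0.
  apply/negP => hsS; have [h1 _] := hPS s s hsS hs.
  have := NR_ge0 s; rewrite d00 in h1; lra.
split.
- by rewrite cardsU1 hsS add1n.
- move=> s' j; rewrite in_setU1 inE => /orP[/eqP-> | hs'] /andP[hjP hj].
    by split => //; apply: hmin.
  exact: hPS.
- exists ([set j | d s j <= NR d k q s] :|: U); split.
    rewrite cardsU1 hsS add1n mulSn disj_aux.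
      apply: leq_add => //; exact: ball_card.
    move=> j; rewrite inE => hj /hUS [s' hs' hs'j].
    have [h1 h2] := hPS s' s hs' hs.
    have := dtri s j s'; rewrite (dsym j s'); lra.
  move=> j; rewrite inE => /orP[hj|/hUS [s' hs' hs'j]].
    by exists s; rewrite ?inE ?eqxx in hj *.
  by exists s'; rewrite ?inE ?hs' ?orbT.
Qed.
End S.

Theorem lemma2 (R : realFieldType) (V : finType) (d : V -> V -> R) (k q : nat)
  (hd : is_metric d) (hk : (1 <= k)%N)
  (S O : {set V}) (sigma : V -> V) :
  alg2_output d k q S O sigma -> feasible k q S O.
Proof.
case=> hl _.
have hinit : Inv d k q [set: V] set0.
  split; first by rewrite cards0.
    by move=> s' j; rewrite inE.
  by exists set0; split => [|j]; rewrite ?cards0 ?mul0n ?inE.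
have [[hSk hPS [U [hU hUS]]] hstop] := loop_inv hd hk hl hinit.
split => //.
have [->|hO] := eqVneq O set0; first by rewrite cards0.
move: hstop; rewrite hO /= -leqNgt => hkS.
have eS : #|S| = k by apply/eqP; rewrite eqn_leq hSk hkS.
case: (hd) => d0 dsym d00 dtri.
have hdis : forall j, j \in O -> j \in U -> False.
  move=> j hj /hUS [s' hs' hs'j].
  have [h1 h2] := hPS s' j hs' hj.
  have := (@NR_ge0 R V d k q hd j); rewrite (dsym j s') in h1; lra.
have := disj_aux hdis.
have := max_card (O :|: U).
have := (@rank_ge V k q hk).
rewrite eS in hU.
lia.
Qed.
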